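(* Let $G$ be a finite $(n+1)$-partite graph with ordered parts $(V^0,\ldots,V^n)$ which is partite type-regular. Then its symmetrization $G^{\circledast S_{n+1}}=\circledast_{\pi\in S_{n+1}}\pi(G)$ is hyper-regular, i.e. for every $1\le m\le n$ all cliques of size $m$ in $G^{\circledast S_{n+1}}$ have joint neighbourhoods of the same size.
   Context: Let $I=\{0,\ldots,n\}$. For an $(n+1)$-partite graph with parts $(V^i)_{i\in I}$ and $J\subseteq I$, a clique is of type $J$ if it has exactly one vertex in $V^j$ for each $j\in J$ and no others. The link of a clique $C$ is the set of vertices adjacent to all vertices of $C$. $G$ is partite type-regular if for every $J\subsetneq I$ and $i\in I\setminus J$ there is $d_J(i)\in\mathbb{N}$ with $|V^i\cap\mathrm{link}(C)|=d_J(i)$ for every clique $C$ of type $J$. Partite product: for $(n+1)$-partite $G_1,G_2$, $G_1\circledast G_2$ has ordered parts $(V_1^i\times V_2^i)_{i\in I}$ and $(a,b)\in V_1^i\times V_2^i$, $(c,d)\in V_1^j\times V_2^j$ ($i\neq j$) are adjacent iff $\{a,c\}\in E_1$ and $\{b,d\}\in E_2$; iterating gives $\circledast$ of finitely many graphs. For $\pi\in S_{n+1}$ (permutations of $I$), $\pi(G)$ is the same graph with ordered parts $(V^{\pi(0)},\ldots,V^{\pi(n)})$. Hyper-regularity (as in the paper): $G$ is $(d_0,\ldots,d_{n-1})$-regular if it is $d_0$-regular and for each $1\le i\le n-1$ the subgraph induced on the joint neighbourhood of every $i$-clique is $d_i$-regular; equivalently, for each $1\le m\le n$ the joint neighbourhood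 of every clique of size $m$ has the same size $d_{m-1}$. *)

(* Defs.v *)
From mathcomp Require Import all_boot all_order all_fingroup.
Set Implicit Arguments. Unset Strict Implicit. Unset Printing Implicit Defensive.

Definition is_clique (V : finType) (e : rel V) (C : {set V}) : Prop :=
  forall x y, x \in C -> y \in C -> x != y -> e x y.

Definition link (V : finType) (e : rel V) (C : {set V}) : {set V} :=
  [set y | [forall x in C, e x y]].

Definition partite_graph (n : nat) (V : finType) (e : rel V)
    (part : V -> 'I_n.+1) : Prop :=
  symmetric e /\ irreflexive e /\ (forall x y, e x y -> part x != part y).

Definition clique_of_type (n : nat) (V : finType) (e : rel V)
    (part : V -> 'I_n.+1) (J : {set 'I_n.+1}) (C : {set V}) : Prop :=
  is_clique e C /\
  forall j : 'I_n.+1, #|[set x in C | part x == j]| = (j \in J).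

Definition partite_type_regular (n : nat) (V : finType) (e : rel V)
    (part : V -> 'I_n.+1) : Prop :=
  forall (J : {set 'I_n.+1}) (i : 'I_n.+1), J != setT -> i \notin J ->
    exists d : nat, forall C : {set V}, clique_of_type e part J C ->
      #|[set x in link e C | part x == i]| = d.

(* Symmetrization G^{sym} = iterated partite product of pi(G) over all pi in S_{n+1}.
   pi(G) has ordered parts (V^{pi 0}, ..., V^{pi n}), so a vertex x of G lies in
   part i of pi(G) iff part x = pi i.  The iterated partite product has, as
   part i, the tuples (v_pi)_pi with v_pi in part i of pi(G), i.e.
   part (v_pi) = pi i for all pi. *)
Definition sym_pred (n : nat) (V : finType) (part : V -> 'I_n.+1)
    (v : {ffun {perm 'I_n.+1} -> V}) : bool :=
  [exists i : 'I_n.+1, [forall s : {perm 'I_n.+1}, part (v s) == s i]].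

Definition sym_vertex (n : nat) (V : finType) (part : V -> 'I_n.+1) :=
  {v : {ffun {perm 'I_n.+1} -> V} | sym_pred part v}.

Definition sym_part (n : nat) (V : finType) (part : V -> 'I_n.+1)
    (v : sym_vertex part) : 'I_n.+1 := part (val v 1%g).

Definition sym_adj (n : nat) (V : finType) (e : rel V) (part : V -> 'I_n.+1)
    : rel (sym_vertex part) :=
  fun v w => (sym_part v != sym_part w) &&
             [forall s : {perm 'I_n.+1}, e (val v s) (val w s)].

(* Hyper-regularity: for each 1 <= m <= n the joint neighbourhood of every
   clique of size m has the same size d_{m-1} (here d m). *)
Definition hyper_regular (n : nat) (W : finType) (f : rel W) : Prop :=
  exists d : nat -> nat, forall m : nat, 1 <= m <= n ->
    forall C : {set W}, is_clique f C -> #|C| = m -> #|link f C| = d m.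

Arguments sym_adj {n V} e part.
Arguments hyper_regular n {W} f.

(* Main.v *)
Require Import Defs.
From mathcomp Require Import all_boot all_order all_fingroup.
Set Implicit Arguments. Unset Strict Implicit. Unset Printing Implicit Defensive.

Lemma cardsXn' (I V : finType) (A : I -> {set V}) :
  #|[set x : {ffun I -> V} | [forall i, x i \in A i]]| = \prod_i #|A i|.
Proof. by rewrite -cardsXn /setXn !cardsE. Qed.


Lemma exists_perm (T : finType) (J1 J2 : {set T}) :
  #|J1| = #|J2| -> exists t : {perm T}, t @: J1 = J2.
Proof.
move=> HJ.
pose s1 := enum J1 ++ enum (~: J1).
pose s2 := enum J2 ++ enum (~: J2).
have mem1 x : x \in s1 by rewrite mem_cat !mem_enum inE orbN.
have sz1 : size s1 = #|T| by rewrite size_cat -!cardE cardsC.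
have sz2 : size s2 = #|T| by rewrite size_cat -!cardE cardsC.
have u2 : uniq s2.
  rewrite cat_uniq !enum_uniq /= andbT; apply/hasPn => x.
  by rewrite mem_enum inE => Hx; rewrite mem_enum.
have f_inj : injective (fun x => nth x s2 (index x s1)).
  move=> x y /= Hxy.
  have ix : index x s1 < size s2 by rewrite sz2 -sz1 index_mem.
  have iy : index y s1 < size s2 by rewrite sz2 -sz1 index_mem.
  have: index x s1 = index y s1.
    apply/eqP; rewrite -(nth_uniq x ix iy u2); apply/eqP.
    by rewrite Hxy (set_nth_default y x iy).
  by move=> E; rewrite -(nth_index x (mem1 x)) E (set_nth_default y x) ?nth_index // index_mem.
exists (perm f_inj); apply/eqP; rewrite eqEcard card_imset ?HJ ?leqnn ?andbT; last exact: perm_inj.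
apply/subsetP => _ /imsetP[x Hx ->]; rewrite permE.
have ix : index x s1 < #|J1|.
  by rewrite /s1 index_cat mem_enum Hx cardE index_mem mem_enum.
by rewrite nth_cat -cardE -HJ ix -mem_enum mem_nth // -cardE -HJ.
Qed.

Section Sym.
Variables (n : nat) (V : finType) (e : rel V) (part : V -> 'I_n.+1).
Hypothesis Hg : partite_graph e part.
Hypothesis Hr : partite_type_regular e part.
Local Notation W := (sym_vertex part).
Local Notation f := (sym_adj e part).
Local Notation sp := (@sym_part n V part).

Lemma partE (v : W) (s : {perm 'I_n.+1}) : part (val v s) = s (sp v).
Proof.
case: v => v Hv; have /existsP[i /forallP H] := Hv; rewrite /sym_part /=.
have := H 1%g; rewrite perm1 => /eqP ->; exact/eqP/H.
Qed.

Lemma sp_inj C : is_clique f C -> {in C &, injective sp}.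
Proof.
move=> HC a b Ha Hb spab; apply/eqP/negPn/negP => nab.
by have := HC a b Ha Hb nab; rewrite /sym_adj spab eqxx.
Qed.

Lemma coord_inj C (s : {perm 'I_n.+1}) : is_clique f C -> {in C &, injective (fun a : W => val a s)}.
Proof.
move=> HC a b Ha Hb /= ab; apply/eqP/negPn/negP=> nab.
have /andP[_ /forallP/(_ s)] := HC a b Ha Hb nab.
by rewrite ab; case: Hg => _ [irr _]; rewrite irr.
Qed.

Definition Cs (C : {set W}) (s : {perm 'I_n.+1}) : {set V} := (fun a : W => val a s) @: C.
Definition Jof (C : {set W}) := sp @: C.

Lemma card_fib C k : is_clique f C -> #|[set a in C | sp a == k]| = (k \in Jof C).
Proof.
move=> HC; case: (boolP (k \in Jof C)) => [/imsetP[a0 Ha0 ->]|nk].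
  have ->: [set a in C | sp a == sp a0] = [set a0]; last by rewrite cards1.
  apply/setP=> b; rewrite !inE.
  apply/andP/eqP => [[Hb /eqP]|->]; [exact: (sp_inj HC Hb Ha0) | by rewrite Ha0 eqxx].
apply/eqP; rewrite cards_eq0; apply/eqP/setP => b; rewrite !inE.
apply/andP => -[Hb /eqP spb]; by move: nk; rewrite -spb (imset_f sp Hb).
Qed.

Lemma Cs_type C (s : {perm 'I_n.+1}) : is_clique f C -> clique_of_type e part (s @: Jof C) (Cs C s).
Proof.
move=> HC; split.
  move=> x y /imsetP[a Ha ->] /imsetP[b Hb ->] nxy.
  have nab: a != b by apply: contraNneq nxy => ->.
  by have /andP[_ /forallP] := HC a b Ha Hb nab; apply.
move=> j.
have ->: [set x in Cs C s | part x == j] =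
     (fun a : W => val a s) @: [set a in C | sp a == s^-1%g j].
  apply/setP => x; rewrite !inE; apply/andP/imsetP.
    case=> /imsetP[a Ha ->] pj; exists a => //.
    by rewrite inE Ha /= -(permK s (sp a)) -partE (eqP pj) eqxx.
  case=> a; rewrite inE => /andP[Ha /eqP spa] ->; split; first exact: imset_f.
  by rewrite partE spa permKV.
rewrite card_in_imset; last first.
  by move=> a b; rewrite !inE => /andP[Ha _] /andP[Hb _]; apply: (@coord_inj C s HC a b Ha Hb).
have -> : (j \in s @: Jof C) = (s^-1%g j \in Jof C).
  by rewrite -{1}(permKV s j) mem_imset //; apply: perm_inj.
by rewrite card_fib.
Qed.

Definition A C (s : {perm 'I_n.+1}) i := [set y in link e (Cs C s) | part y == s i].

Lemma link_fiber C i : is_clique f C -> i \notin Jof C ->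
  #|[set w in link f C | sp w == i]| = \prod_s #|A C s i|.
Proof.
move=> HC Hi.
rewrite -(cardsXn' (fun s => A C s i)) -(card_imset _ val_inj); apply: eq_card => g.
  rewrite [in RHS]inE; apply/imsetP/forallP.
  case=> w; rewrite !inE => /andP[Hw /eqP spw] -> s; rewrite !inE partE spw eqxx andbT.
  apply/forallP => x; apply/implyP => /imsetP[a Ha ->].
  by move: Hw => /forallP/(_ a); rewrite Ha => /andP[_ /forallP]; apply.
move=> Hgs.
have Hp : sym_pred part g.
  by apply/existsP; exists i; apply/forallP => s; have := Hgs s; rewrite inE => /andP[_].
exists (exist _ g Hp) => //.
have sw : sp (exist _ g Hp) = i.
  by rewrite /sym_part /=; have := Hgs 1%g; rewrite inE perm1 => /andP[_ /eqP].
rewrite !inE sw eqxx andbT; apply/forallP => a; apply/implyP => Ha.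
rewrite /sym_adj sw; apply/andP; split.
  by apply: contraNneq Hi => <-; apply: imset_f.
apply/forallP => s /=; have := Hgs s; rewrite !inE => /andP[/forallP/(_ (val a s))].
by rewrite (imset_f (fun a : W => val a s) Ha) => /implyP H _; exact: H.
Qed.


Lemma link_card C : is_clique f C ->
  #|link f C| = \sum_(i | i \notin Jof C) \prod_s #|A C s i|.
Proof.
move=> HC; rewrite -sum1_card (partition_big sp predT) //=.
rewrite (bigID (fun j => j \in Jof C)) /= big1 ?add0n.
  by apply: eq_bigr => i Hi; rewrite sum1dep_card link_fiber.
move=> j /imsetP[a Ha ->]; apply: big1 => w /andP[Hw /eqP spw].
move: Hw; rewrite inE => /forallP/(_ a); rewrite Ha /= => /andP[].
by rewrite spw eqxx.
Qed.

Lemma reg_eq J X1 X2 i :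
  clique_of_type e part J X1 -> clique_of_type e part J X2 ->
  J != setT -> i \notin J ->
  #|[set x in link e X1 | part x == i]| = #|[set x in link e X2 | part x == i]|.
Proof. by move=> H1 H2 HJ Hi; have [d Hd] := Hr HJ Hi; rewrite !Hd. Qed.

Lemma card_Jof C : is_clique f C -> #|Jof C| = #|C|.
Proof. by move=> HC; rewrite card_in_imset //; apply: sp_inj. Qed.

Lemma key C1 C2 : is_clique f C1 -> is_clique f C2 -> #|C1| = #|C2| -> #|C1| <= n ->
  #|link f C1| = #|link f C2|.
Proof.
move=> H1 H2 Hc Hn.
have [t Ht] := exists_perm (etrans (card_Jof H1) (etrans Hc (esym (card_Jof H2)))).
rewrite !link_card // [in RHS](reindex_inj (@perm_inj _ t)) /=.
have Hmem i : (t i \in Jof C2) = (i \in Jof C1) by rewrite -Ht mem_imset //; apply: perm_inj.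
apply: eq_big => [i|i Hi]; first by rewrite Hmem.
rewrite (reindex_inj (mulgI t)) /=; apply: eq_bigr => s _.
rewrite /A permM.
have Et : (t * s)%g @: Jof C1 = s @: Jof C2.
  by rewrite -Ht -imset_comp; apply: eq_imset => x; rewrite /= permM.
apply: (@reg_eq (s @: Jof C2)).
- by rewrite -Et; apply: Cs_type.
- exact: Cs_type.
- apply/negP => /eqP HT; move: Hn; rewrite Hc -(card_Jof H2).
  rewrite -(card_imset _ (@perm_inj _ s)) HT cardsT card_ord ltnn.
  done.
- by rewrite mem_imset ?Hmem //; apply: perm_inj.
Qed.

End Sym.

Definition cliqueb (W : finType) (f : rel W) (C : {set W}) : bool :=
  [forall x in C, forall y in C, (x != y) ==> f x y].

Lemma cliqueP (W : finType) (f : rel W) (C : {set W}) :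
  reflect (is_clique f C) (cliqueb f C).
Proof.
apply: (iffP idP).
  move=> /forallP H x y Hx Hy Hxy; move: (H x); rewrite Hx /= => /forallP/(_ y).
  by rewrite Hy Hxy.
move=> H; apply/forallP => x; apply/implyP => Hx; apply/forallP => y.
by apply/implyP => Hy; apply/implyP; apply: H.
Qed.

Theorem mainTheorem9 (n : nat) (V : finType) (e : rel V)
    (part : V -> 'I_n.+1) :
  partite_graph e part ->
  partite_type_regular e part ->
  hyper_regular n (sym_adj e part).
Proof.
move=> Hg Hr.
exists (fun m => if [pick C | cliqueb (sym_adj e part) C && (#|C| == m)] is Some C
                 then #|link (sym_adj e part) C| else 0).
move=> m /andP[_ Hm] C HC HCm.
case: pickP => [C0 /andP[/cliqueP H0 /eqP H0m] | Hnone].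
  by apply: (key Hg Hr) => //; rewrite ?HCm ?H0m.
by have := Hnone C; rewrite HCm eqxx andbT (introT (cliqueP _ _) HC).
Qed.
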